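(* Fix $k>0$ and $K>0$. Let $(\tau^\star,\delta^\star,\gamma^\star,s^* )$ be such that $1<\delta^\star<\Phi$, $\tau^\star=\tau_m(\delta^\star)$, and either $\gamma^\star=M_{\mathcal F}(\delta^\star)/(1+k)$ and $s^*=\pi/2$, or $0<k<1$, $\gamma^\star=M_{\mathcal F}(\delta^\star)/(1-k)$ and $s^*=3\pi/2$. Let $H=\{(\tau,\delta,\gamma,s):\ 0<\tau\le1,\ \delta>1,\ \gamma>0,\ s\in S^1,\ g(\tau,s)=0,\ \text{and } D\mathcal G_\tau(\tau,s)\text{ has eigenvalues } e^{\pm i\theta}\text{ for some }\theta\in(0,\pi)\}$, where $g$ and $\mathcal G_\tau$ are computed with parameters $\delta,\gamma$. Then $(\tau^\star,\delta^\star,\gamma^\star,s^* )$ is an accumulation point of $H$. Moreover, if $\mathbf p(\tau,\delta,\gamma,s)=(\tau,\delta,\gamma)$, then $\mathbf p(H)$ contains a smooth two-dimensional surface in $\mathbb R^3$ having $(\tau^\star,\delta^\star,\gamma^\star)$ in its closure.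
   Context: Let $p(\delta)=-\delta^2+\delta+1$, $\Phi=(1+\sqrt5)/2$, $\mathcal F_\delta(\tau)=\tau^{p(\delta)}-\tau^\delta$; for $1<\delta<\Phi$, $\tau_m(\delta)=(p(\delta)/\delta)^{1/(\delta^2-1)}$ is the maximiser of $\mathcal F_\delta$ on $(0,1]$ and $M_{\mathcal F}(\delta)=\mathcal F_\delta(\tau_m(\delta))$. With $S^1=\mathbb R/2\pi\mathbb Z$, $g(\tau,s)=\tau^{\delta^2}+\gamma\tau^{\delta^2-\delta}(1+k\sin s)-\tau$, and $\mathcal G_\tau(y,s)=\left(y^{\delta^2}+\gamma y^{\delta^2-\delta}(1+k\sin s),\ s-\frac{\ln y}{K}+\frac{\ln\tau}{K}\right)$ with derivative $D\mathcal G_\tau(y,s)=\begin{pmatrix}\delta^2y^{\delta^2-1}+\gamma(\delta^2-\delta)y^{-p(\delta)}(1+k\sin s) & \gamma k y^{\delta^2-\delta}\cos s\\ -\frac{1}{Ky} & 1\end{pmatrix}$; $D\mathcal G_\tau(\tau,s)$ denotes this matrix at $y=\tau$. *)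

(* Defs.v *)
From Stdlib Require Import Reals List.
From Coquelicot Require Import Coquelicot.
Open Scope R_scope.

Definition pd (d : R) : R := - d ^ 2 + d + 1.

Definition Phi : R := (1 + sqrt 5) / 2.

Definition FF (d tau : R) : R := Rpower tau (pd d) - Rpower tau d.

Definition tau_m (d : R) : R := Rpower (pd d / d) (1 / (d ^ 2 - 1)).

Definition MF (d : R) : R := FF d (tau_m d).

Definition gfun (k d gam tau s : R) : R :=
  Rpower tau (d ^ 2) + gam * Rpower tau (d ^ 2 - d) * (1 + k * sin s) - tau.

(* Entries of D G_tau(y,s) evaluated at y = tau:
   [[DGa, DGb], [DGc, DGd]] *)
Definition DGa (k d gam tau s : R) : R :=
  d ^ 2 * Rpower tau (d ^ 2 - 1)
  + gam * (d ^ 2 - d) * Rpower tau (- pd d) * (1 + k * sin s).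
Definition DGb (k d gam tau s : R) : R :=
  gam * k * Rpower tau (d ^ 2 - d) * cos s.
Definition DGc (K tau : R) : R := - (1 / (K * tau)).
Definition DGd : R := 1.

Definition is_eigenvalue2 (a b c d : R) (lam : C) : Prop :=
  exists v1 v2 : C, (v1 <> RtoC 0 \/ v2 <> RtoC 0) /\
    Cplus (Cmult (RtoC a) v1) (Cmult (RtoC b) v2) = Cmult lam v1 /\
    Cplus (Cmult (RtoC c) v1) (Cmult (RtoC d) v2) = Cmult lam v2.

Definition cis (th : R) : C := (cos th, sin th).

(* The set H (with the angle s represented by a real number; all data are
   2*pi-periodic in s, so this is the lift of H to R^4). *)
Definition Hset (k K : R) (x : R * R * R * R) : Prop :=
  let '(tau, d, gam, s) := x in
  0 < tau <= 1 /\ 1 < d /\ 0 < gam /\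
  gfun k d gam tau s = 0 /\
  exists th, 0 < th < PI /\
    is_eigenvalue2 (DGa k d gam tau s) (DGb k d gam tau s) (DGc K tau) DGd (cis th) /\
    is_eigenvalue2 (DGa k d gam tau s) (DGb k d gam tau s) (DGc K tau) DGd (cis (- th)).

Definition accumulation_point4 (A : R * R * R * R -> Prop) (p : R * R * R * R) : Prop :=
  let '(p1, p2, p3, p4) := p in
  forall eps, 0 < eps ->
    exists x1 x2 x3 x4, A (x1, x2, x3, x4) /\ (x1, x2, x3, x4) <> p /\
      Rabs (x1 - p1) < eps /\ Rabs (x2 - p2) < eps /\
      Rabs (x3 - p3) < eps /\ Rabs (x4 - p4) < eps.

Definition in_closure3 (S : R * R * R -> Prop) (p : R * R * R) : Prop :=
  let '(p1, p2, p3) := p in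
  forall eps, 0 < eps ->
    exists x1 x2 x3, S (x1, x2, x3) /\
      Rabs (x1 - p1) < eps /\ Rabs (x2 - p2) < eps /\ Rabs (x3 - p3) < eps.

Inductive coord3 := X1 | X2 | X3.

Definition shift3 (i : coord3) (t : R) (x : R * R * R) : R * R * R :=
  let '(a, b, c) := x in
  match i with
  | X1 => (a + t, b, c)
  | X2 => (a, b + t, c)
  | X3 => (a, b, c + t)
  end.

Definition partial3 (i : coord3) (f : R * R * R -> R) (x : R * R * R) : R :=
  Derive (fun t => f (shift3 i t x)) 0.

Definition iter_partial3 (l : list coord3) (f : R * R * R -> R) : R * R * R -> R :=
  fold_right partial3 f l.

Definition smooth_on3 (U : R * R * R -> Prop) (f : R * R * R -> R) : Prop :=
  forall (l : list coord3) x, U x ->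
    continuous (iter_partial3 l f) x /\
    forall i, ex_derive (fun t => iter_partial3 l f (shift3 i t x)) 0.

(* S is a (nonempty) smooth two-dimensional surface in R^3, i.e. an embedded
   C^infty submanifold of dimension 2: locally the regular zero set of a
   smooth function. *)
Definition smooth_surface3 (S : R * R * R -> Prop) : Prop :=
  (exists x, S x) /\
  forall x, S x ->
    exists (U : R * R * R -> Prop) (F : R * R * R -> R),
      open U /\ U x /\ smooth_on3 U F /\
      (forall y, U y ->
         partial3 X1 F y <> 0 \/ partial3 X2 F y <> 0 \/ partial3 X3 F y <> 0) /\
      (forall y, U y -> (S y <-> F y = 0)).

(* Main.v *)
Require Import Defs.
From Stdlib Require Import Reals Lra List.
From Coquelicot Require Import Coquelicot.
Open Scope R_scope.


Lemma isd_mult (f g : R -> R) x df dg : is_derive f x df -> is_derive g x dg ->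
  is_derive (fun y => f y * g y) x (df * g x + f x * dg).
Proof. intros H1 H2. exact (is_derive_mult f g x df dg H1 H2 Rmult_comm). Qed.
Lemma isd_plus (f g : R -> R) x df dg : is_derive f x df -> is_derive g x dg ->
  is_derive (fun y => f y + g y) x (df + dg).
Proof. intros H1 H2. exact (is_derive_plus f g x df dg H1 H2). Qed.
Lemma isd_comp (f g : R -> R) x df dg : is_derive f (g x) df -> is_derive g x dg ->
  is_derive (fun y => f (g y)) x (dg * df).
Proof. intros H1 H2. exact (is_derive_comp f g x df dg H1 H2). Qed.

Lemma isd_eq (f : R -> R) x l l' : is_derive f x l -> l = l' -> is_derive f x l'.
Proof. intros H ->; exact H. Qed.

Inductive tm := V (i:coord3) | Cst (c:R) | Add (a b:tm) | Mul (a b : tm)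
  | Inv (a:tm) | Exp (a:tm) | Ln (a:tm).

Definition crd (i : coord3) (x : R*R*R) : R :=
  match i with X1 => fst (fst x) | X2 => snd (fst x) | X3 => snd x end.

Fixpoint ev (t : tm) (x : R*R*R) : R :=
  match t with
  | V i => crd i x | Cst c => c
  | Add a b => ev a x + ev b x | Mul a b => ev a x * ev b x
  | Inv a => / ev a x | Exp a => exp (ev a x) | Ln a => ln (ev a x) end.

Fixpoint Dm (t : tm) (x : R*R*R) : Prop :=
  match t with
  | V _ | Cst _ => True
  | Add a b | Mul a b => Dm a x /\ Dm b x
  | Inv a => Dm a x /\ ev a x <> 0
  | Exp a => Dm a x
  | Ln a => Dm a x /\ 0 < ev a x end.

Definition kd (i j : coord3) : R :=
  match i, j with X1, X1 | X2, X2 | X3, X3 => 1 | _, _ => 0 end.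

Fixpoint dv (i : coord3) (t : tm) : tm :=
  match t with
  | V j => Cst (kd i j) | Cst _ => Cst 0
  | Add a b => Add (dv i a) (dv i b)
  | Mul a b => Add (Mul (dv i a) b) (Mul a (dv i b))
  | Inv a => Mul (Cst (-1)) (Mul (dv i a) (Mul (Inv a) (Inv a)))
  | Exp a => Mul (dv i a) (Exp a)
  | Ln a => Mul (dv i a) (Inv a) end.

Lemma Dm_dv i t x : Dm t x -> Dm (dv i t) x.
Proof. induction t; simpl; intros; try tauto. destruct H; repeat split; auto; lra. Qed.

Lemma deriv_ev t i x s0 : Dm t (shift3 i s0 x) ->
  is_derive (fun s => ev t (shift3 i s x)) s0 (ev (dv i t) (shift3 i s0 x)).
Proof.
  induction t; simpl; intros H.
  - destruct x as [[a b] c]; destruct i, i0; simpl; auto_derive; auto; ring.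
  - apply (is_derive_const c s0).
  - destruct H. now apply isd_plus; auto.
  - destruct H. now apply isd_mult; auto.
  - destruct H as [H1 H2]. eapply isd_eq. apply (is_derive_inv _ _ _ (IHt H1) H2).
    simpl. field. auto.
  - eapply is_derive_ext. 2:{ apply (isd_comp exp (fun s => ev t (shift3 i s x))); auto.
      apply is_derive_exp. } reflexivity.
  - destruct H as [H1 H2]. eapply is_derive_ext. 2:{ apply (isd_comp ln (fun s => ev t (shift3 i s x))); auto.
      apply is_derive_ln; auto. } reflexivity.
Qed.

Lemma cont_ev t x : Dm t x -> continuous (ev t) x.
Proof.
  induction t; simpl; intros H.
  - destruct x as [[a b] c]; destruct i; simpl.
    + apply (continuous_comp (U:=prod_UniformSpace (prod_UniformSpace R_UniformSpace R_UniformSpace) R_UniformSpace) fst fst). apply continuous_fst. apply continuous_fst.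
    + apply (continuous_comp (U:=prod_UniformSpace (prod_UniformSpace R_UniformSpace R_UniformSpace) R_UniformSpace) fst snd). apply continuous_fst. apply continuous_snd.
    + apply continuous_snd.
  - apply continuous_const.
  - destruct H. apply (continuous_plus (ev t1) (ev t2)); auto.
  - destruct H. apply (continuous_mult (ev t1) (ev t2)); auto.
  - destruct H. apply (continuous_comp (ev t) Rinv); auto. apply continuous_Rinv; auto.
  - apply (continuous_comp (ev t) exp); auto. apply continuous_exp.
  - destruct H. apply (continuous_comp (ev t) ln); auto. apply continuous_ln; auto.
Qed.

Lemma loc_ball_R (f : R*R*R -> R) x : continuous f x -> forall e : posreal,
  locally x (fun y => Rabs (f y - f x) < e).
Proof.
  intros Hc e. apply (Hc (fun z => Rabs (z - f x) < e)). exists e. intros y Hy. exact Hy.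
Qed.

Lemma loc_pos (f : R*R*R -> R) x : continuous f x -> 0 < f x -> locally x (fun y => 0 < f y).
Proof.
  intros Hc Hp. assert (He : 0 < f x) by exact Hp.
  eapply filter_imp. 2: apply (loc_ball_R f x Hc (mkposreal _ He)).
  simpl. intros y Hy. apply Rabs_def2 in Hy. lra.
Qed.

Lemma loc_nz (f : R*R*R -> R) x : continuous f x -> f x <> 0 -> locally x (fun y => f y <> 0).
Proof.
  intros Hc Hp. assert (He : 0 < Rabs (f x)) by (apply Rabs_pos_lt; auto).
  eapply filter_imp. 2: apply (loc_ball_R f x Hc (mkposreal _ He)).
  simpl. intros y Hy Hy0. rewrite Hy0 in Hy. rewrite Rminus_0_l, Rabs_Ropp in Hy. lra.
Qed.

Lemma loc_Dm t x : Dm t x -> locally x (Dm t).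
Proof.
  induction t; simpl; intros H.
  - apply filter_true.
  - apply filter_true.
  - destruct H. apply filter_and; auto.
  - destruct H. apply filter_and; auto.
  - destruct H. apply filter_and; auto. apply loc_nz; auto. apply cont_ev; auto.
  - auto.
  - destruct H. apply filter_and; auto. apply loc_pos; auto. apply cont_ev; auto.
Qed.

Lemma ballR (x y : R) (e : posreal) : Rabs (y - x) < e -> ball x e y.
Proof. intros H. exact H. Qed.
Lemma ball3 a b c a' b' c' (e : posreal) : Rabs (a' - a) < e -> Rabs (b' - b) < e -> Rabs (c' - c) < e ->
  @ball (prod_UniformSpace (prod_UniformSpace R_UniformSpace R_UniformSpace) R_UniformSpace) (a, b, c) e (a', b', c').
Proof. intros. split; [split|]; apply ballR; auto. Qed.

Lemma loc_shift (P : R*R*R -> Prop) i x : locally x P -> locally 0 (fun s => P (shift3 i s x)).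
Proof.
  intros [e He]. exists e. intros s Hs. apply He. change R in s.
  assert (Hs' : Rabs s < e). { unfold ball in Hs; simpl in Hs; unfold AbsRing_ball, abs, minus, plus, opp in Hs; simpl in Hs.
    now rewrite Ropp_0, Rplus_0_r in Hs. }
  assert (H0 : forall z : R, Rabs (z - z) < e). { intros; unfold Rminus; rewrite Rplus_opp_r, Rabs_R0; apply cond_pos. }
  assert (H1 : forall z : R, Rabs (z + s - z) < e). { intros; replace (z + s - z) with s by ring; auto. }
  destruct x as [[a b] c]; destruct i; simpl; apply ball3; auto.
Qed.

Lemma shift0 i x : shift3 i 0 x = x.
Proof. destruct x as [[a b] c]; destruct i; simpl; now rewrite Rplus_0_r. Qed.

Lemma Dm_dvs l t x : Dm t x -> Dm (fold_right dv t l) x.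
Proof. induction l; simpl; auto. intros; apply Dm_dv; auto. Qed.

Lemma iter_ev l t x : Dm t x -> iter_partial3 l (ev t) x = ev (fold_right dv t l) x.
Proof.
  revert x; induction l as [|i l IH]; simpl; intros x Hx; auto.
  unfold partial3.
  rewrite (Derive_ext_loc _ (fun s => ev (fold_right dv t l) (shift3 i s x))).
  - apply is_derive_unique. pose proof (deriv_ev (fold_right dv t l) i x 0) as Hd.
    rewrite shift0 in Hd. apply Hd. apply Dm_dvs; auto.
  - apply (filter_imp (fun s => Dm t (shift3 i s x))). intros; apply IH; auto.
    apply loc_shift, loc_Dm; auto.
Qed.

Lemma smooth_ev (U : R*R*R -> Prop) t : (forall x, U x -> Dm t x) -> smooth_on3 U (ev t).
Proof.
  intros HU l x Hx. specialize (HU x Hx). split.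
  - apply (continuous_ext_loc _ (ev (fold_right dv t l))).
    + apply (filter_imp (Dm t)); [|apply loc_Dm; auto]. intros y Hy. symmetry; apply iter_ev; auto.
    + apply cont_ev, Dm_dvs; auto.
  - intros i. exists (ev (dv i (fold_right dv t l)) (shift3 i 0 x)).
    apply (is_derive_ext_loc (fun s => ev (fold_right dv t l) (shift3 i s x))).
    + apply (filter_imp (fun s => Dm t (shift3 i s x))). intros; symmetry; apply iter_ev; auto.
      apply loc_shift, loc_Dm; auto.
    + apply deriv_ev. rewrite shift0. apply Dm_dvs; auto.
Qed.

Lemma partial_ev t i x : Dm t x -> partial3 i (ev t) x = ev (dv i t) x.
Proof. intros H. apply (iter_ev (i :: nil) t x H). Qed.

Lemma open_Dm t : open (Dm t).
Proof. intros x Hx. apply loc_Dm; auto. Qed.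


Lemma eig2 a b c th : c <> 0 -> a - b * c = 1 -> a + 1 = 2 * cos th ->
  is_eigenvalue2 a b c DGd (cis th).
Proof.
  intros Hc Hdet Htr. unfold DGd, cis.
  exists (cos th - 1, sin th), (RtoC c). split.
  { right. intros H. apply Hc. unfold RtoC in H. injection H; auto. }
  assert (Hs := sin2_cos2 th). unfold Rsqr in Hs.
  unfold Cplus, Cmult, RtoC; simpl. split; f_equal; nra.
Qed.

Lemma Rpow_add t a b : Rpower t (a + b) = Rpower t a * Rpower t b.
Proof. apply Rpower_plus. Qed.

Lemma core k K t d g s : 0 < k -> 0 < K -> 0 < t < 1 -> 1 < d -> 0 < g ->
  0 < 1 + k * sin s ->
  g * (1 + k * sin s) = Rpower t (pd d) - Rpower t d ->
  0 < cos s ->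
  (d - k * cos s / (K * (1 + k * sin s))) * (1 - Rpower t (d^2 - 1)) = d^2 - 1 ->
  Hset k K (t, d, g, s).
Proof.
  intros Hk HK Ht Hd Hg Hu Hgu Hc Hh.
  set (u := 1 + k * sin s) in *.
  set (h := k * cos s / (K * u)) in *.
  set (q := Rpower t (pd d)) in *.
  set (w := Rpower t (d^2 - 1)) in *.
  assert (Hq : 0 < q) by (unfold q, Rpower; apply exp_pos).
  assert (Hw : 0 < w) by (unfold w, Rpower; apply exp_pos).
  assert (Hw1 : w < 1).
  { unfold w, Rpower. apply (Rlt_le_trans _ (exp 0)); [apply exp_increasing|rewrite exp_0; lra].
    assert (ln t < 0) by (rewrite <- ln_1; apply ln_increasing; lra). assert (d^2 - 1 > 0) by nra. nra. }
  assert (E1 : Rpower t 1 = t) by (apply Rpower_1; lra).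
  assert (Ed2 : Rpower t (d^2) = t * w).
  { replace (d^2) with (1 + (d^2-1)) by ring. rewrite Rpow_add, E1. reflexivity. }
  assert (Edd : Rpower t (d^2 - d) = t / q).
  { assert (Rpower t (d^2 - d) * q = t). { unfold q. rewrite <- Rpow_add. transitivity (Rpower t 1); [f_equal; unfold pd; ring | exact E1]. }
    apply (Rmult_eq_reg_r q); [rewrite H; field; lra | lra]. }
  assert (Ed : Rpower t d = q * w).
  { unfold q, w. rewrite <- Rpow_add. f_equal; unfold pd; ring. }
  assert (Emp : Rpower t (- pd d) = / q) by (apply Rpower_Ropp).
  assert (Hh0 : 0 < h).
  { unfold h. apply Rdiv_lt_0_compat; [nra|]. apply Rmult_lt_0_compat; lra. }
  rewrite Ed in Hgu.
  unfold Hset. split; [lra|]. split; [lra|]. split; [lra|]. split.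
  { unfold gfun. fold u. rewrite Ed2, Edd. field_simplify_eq; [|lra]. nra. }
  assert (HA : DGa k d g t s = d^2 * w + (d^2 - d) * (1 - w)).
  { unfold DGa. fold u. rewrite Emp.
    replace (Rpower t (d^2 - 1)) with w by reflexivity.
    field_simplify_eq; [|lra]. nra. }
  assert (HBC : DGb k d g t s * DGc K t = - h * (1 - w)).
  { unfold DGb, DGc. rewrite Edd. unfold h.
    assert (g = q * (1 - w) / u) by (field_simplify_eq; lra).
    subst g. field. repeat split; lra. }
  set (T2 := (DGa k d g t s + 1) / 2).
  assert (HT : -1 < T2 < 1).
  { unfold T2; rewrite HA. split; [nra|].
    assert (h * (1 - w) > 0) by nra. nra. }
  exists (acos T2). split. { apply acos_bound_lt; auto. }
  assert (Hdet : DGa k d g t s - DGb k d g t s * DGc K t = 1).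
  { rewrite HBC, HA. nra. }
  assert (Hcn : DGc K t <> 0).
  { unfold DGc. apply Ropp_neq_0_compat. unfold Rdiv. rewrite Rmult_1_l.
    apply Rinv_neq_0_compat. nra. }
  split.
  - apply eig2; auto. rewrite cos_acos; [unfold T2; lra|lra].
  - apply eig2; auto. rewrite cos_neg, cos_acos; [unfold T2; lra|lra].
Qed.


Definition tT := V X1. Definition tD := V X2. Definition tG := V X3.
Definition neg a := Mul (Cst (-1)) a.
Definition sub a b := Add a (neg b).
Definition sq a := Mul a a.
Definition Lt := Ln tT.
Definition dm1 := Add (sq tD) (Cst (-1)).
Definition pdT := Add (neg (sq tD)) (Add tD (Cst 1)).
Definition W := Exp (Mul dm1 Lt).
Definition Fd := sub (Exp (Mul pdT Lt)) (Exp (Mul tD Lt)).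
Definition om := sub (Cst 1) W.
Definition hn := sub (Mul tD om) dm1.
Definition Gt k K := Add (Mul (sq om) (sub (sq (sub Fd tG)) (Mul (Cst (k^2)) (sq tG))))
   (Mul (Cst (K^2)) (Mul (sq hn) (sq Fd))).
Definition Nzt k := Add (sub Fd tG) (Mul (Cst (k^2)) tG).
Definition Rt k := Add (Ln tT) (Add (Ln (sub (Cst 1) tT)) (Add (Ln (sub tD (Cst 1)))
  (Add (Ln tG) (Add (Ln Fd) (Add (Ln hn) (Add (Ln om) (Inv (Nzt k)))))))).

Definition Fr t d := exp (pd d * ln t) - exp (d * ln t).
Definition Wr t d := exp ((d^2 - 1) * ln t).

Lemma ev_W t d g : ev W (t, d, g) = Wr t d.
Proof. unfold Wr, W, dm1, Lt, sq, tD, tT. cbn [ev crd fst snd]. f_equal. ring. Qed.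
Lemma ev_Fd t d g : ev Fd (t, d, g) = Fr t d.
Proof. unfold Fr, pd, Fd, pdT, sub, neg, sq, Lt, tT, tD. cbn [ev crd fst snd].
  replace (- d ^ 2 + d + 1) with (-1 * (d * d) + (d + 1)) by ring. ring. Qed.
Lemma ev_om t d g : ev om (t, d, g) = 1 - Wr t d.
Proof. unfold om, sub, neg. cbn [ev]. rewrite ev_W. unfold dm1, sq, tT, tD, tG; cbn [ev crd fst snd]. ring. Qed.
Lemma ev_hn t d g : ev hn (t, d, g) = d * (1 - Wr t d) - (d^2 - 1).
Proof. unfold hn, sub, neg. cbn [ev]. rewrite ev_om. unfold dm1, sq, tT, tD, tG; cbn [ev crd fst snd]. ring. Qed.
Lemma ev_Nzt k t d g : ev (Nzt k) (t, d, g) = Fr t d - g + k^2 * g.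
Proof. unfold Nzt, sub, neg. cbn [ev]. rewrite ev_Fd. unfold dm1, sq, tT, tD, tG; cbn [ev crd fst snd]. ring. Qed.
Lemma ev_Gt k K t d g : ev (Gt k K) (t, d, g) =
  (1 - Wr t d)^2 * ((Fr t d - g)^2 - k^2 * g^2) + K^2 * ((d * (1 - Wr t d) - (d^2 - 1))^2 * (Fr t d)^2).
Proof. unfold Gt, sq, sub, neg. cbn [ev]. rewrite ev_om, ev_hn, ev_Fd. unfold dm1, sq, tT, tD, tG; cbn [ev crd fst snd]. ring. Qed.

Lemma Dm_Fd x : Dm Fd x <-> 0 < crd X1 x.
Proof. simpl. tauto. Qed.

Lemma Rt_spec k t d g : Dm (Rt k) (t, d, g) <->
  (0 < t /\ 0 < 1 - t /\ 0 < d - 1 /\ 0 < g /\ 0 < Fr t d /\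
   0 < d * (1 - Wr t d) - (d^2 - 1) /\ 0 < 1 - Wr t d /\ Fr t d - g + k^2 * g <> 0).
Proof.
  unfold Rt. cbn [Dm]. rewrite ev_Fd, ev_hn, ev_om, ev_Nzt.
  assert (E1 : ev (sub (Cst 1) tT) (t, d, g) = 1 - t) by (unfold sub, neg, tT; cbn [ev crd fst snd]; ring).
  assert (E2 : ev (sub tD (Cst 1)) (t, d, g) = d - 1) by (unfold sub, neg, tD; cbn [ev crd fst snd]; ring).
  rewrite E1, E2.
  unfold Nzt, hn, om, W, Fd, pdT, dm1, Lt, sq, sub, neg, tT, tD, tG. cbn [Dm ev crd fst snd].
  tauto.
Qed.

Ltac unf := unfold Nzt, hn, om, W, Fd, pdT, dm1, Lt, sq, sub, neg, tT, tD, tG.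
Lemma dW t d g : ev (dv X3 W) (t, d, g) = 0.
Proof. unf. cbn [dv ev kd crd fst snd]. ring. Qed.
Lemma dFd t d g : ev (dv X3 Fd) (t, d, g) = 0.
Proof. unf. cbn [dv ev kd crd fst snd]. ring. Qed.
Lemma dom t d g : ev (dv X3 om) (t, d, g) = 0.
Proof. unf. cbn [dv ev kd crd fst snd]. ring. Qed.
Lemma dhn t d g : ev (dv X3 hn) (t, d, g) = 0.
Proof. unf. cbn [dv ev kd crd fst snd]. ring. Qed.

Lemma dGt k K t d g : ev (dv X3 (Gt k K)) (t, d, g) = -2 * (1 - Wr t d)^2 * (Fr t d - g + k^2 * g).
Proof.
  unfold Gt, sq, sub, neg. cbn [dv ev].
  rewrite dom, dhn, dFd, ev_om, ev_hn, ev_Fd. unfold tG. cbn [dv ev kd crd fst snd]. ring.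
Qed.

Lemma Dm_Gt k K t d g : 0 < t -> Dm (Gt k K) (t, d, g).
Proof. intros. unfold Gt. unf. cbn [Dm ev crd fst snd]. tauto. Qed.

Definition Sset k K (y : R*R*R) : Prop := Dm (Rt k) y /\ ev (Gt k K) y = 0.

Lemma surf k K : (exists x, Sset k K x) -> smooth_surface3 (Sset k K).
Proof.
  intros Hne. split; auto. intros x [HR HG].
  exists (Dm (Rt k)), (ev (Gt k K)). split; [apply open_Dm|]. split; [auto|]. split.
  { apply smooth_ev. intros [[t d] g] Hy. apply Rt_spec in Hy. apply Dm_Gt. tauto. }
  split.
  { intros [[t d] g] Hy. right; right. apply Rt_spec in Hy.
    rewrite partial_ev by (apply Dm_Gt; tauto). rewrite dGt.
    destruct Hy as (_ & _ & _ & _ & _ & _ & H1 & H2).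
    apply Rmult_integral_contrapositive_currified; auto.
    apply Rmult_integral_contrapositive_currified; [lra|]. apply pow_nonzero; lra. }
  intros y Hy. unfold Sset. tauto.
Qed.

Lemma S_H k K t d g : 0 < k -> 0 < K -> Sset k K (t, d, g) -> exists s, Hset k K (t, d, g, s).
Proof.
  intros Hk HK [HR HG]. apply Rt_spec in HR. rewrite ev_Gt in HG.
  destruct HR as (Ht & Ht1 & Hd & Hg & HF & Hh & Hw & Hnz).
  set (F := Fr t d) in *. set (w := Wr t d) in *.
  set (u := F / g). set (h := (d * (1 - w) - (d^2 - 1)) / (1 - w)).
  assert (Hu : 0 < u) by (unfold u; apply Rdiv_lt_0_compat; lra).
  assert (Hh0 : 0 < h) by (unfold h; apply Rdiv_lt_0_compat; lra).
  assert (EF : F = u * g) by (unfold u; field; lra).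
  assert (Eh : d * (1 - w) - (d^2 - 1) = h * (1 - w)) by (unfold h; field; lra).
  rewrite Eh, EF in HG.
  assert (Hc : (u - 1)^2 + (K * h * u)^2 = k^2).
  { assert (Hf : ((1-w)^2 * g^2) * ((u-1)^2 + (K*h*u)^2 - k^2) = 0) by (rewrite <- HG; ring).
    apply Rmult_integral in Hf. destruct Hf as [Hf|Hf]; [|lra].
    exfalso. apply Rmult_integral in Hf. destruct Hf as [Hf|Hf]; apply pow_nonzero in Hf; lra. }
  set (a := (u - 1) / k).
  assert (Ha : -1 <= a <= 1).
  { unfold a. assert (Hk2 : (u-1)^2 <= k^2) by nra.
    split; [apply (Rmult_le_reg_r k); [lra|]; field_simplify; nra
           |apply (Rmult_le_reg_r k); [lra|]; field_simplify; nra]. }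
  exists (asin a).
  assert (Es : sin (asin a) = a) by (apply sin_asin; auto).
  assert (Ec : cos (asin a) = K * h * u / k).
  { rewrite cos_asin by auto.
    replace (1 - a²) with (Rsqr (K * h * u / k)).
    - apply sqrt_Rsqr. apply Rlt_le. apply Rdiv_lt_0_compat; [|lra].
      apply Rmult_lt_0_compat; [|lra]. apply Rmult_lt_0_compat; lra.
    - unfold Rsqr, a. field_simplify_eq; [|lra]. nra. }
  assert (Eu : 1 + k * sin (asin a) = u) by (rewrite Es; unfold a; field; lra).
  apply core; auto; try lra.
  - rewrite Eu. transitivity F; [rewrite EF; ring | reflexivity].
  - rewrite Ec. apply Rdiv_lt_0_compat; [|lra].
    apply Rmult_lt_0_compat; [|lra]. apply Rmult_lt_0_compat; lra.
  - rewrite Eu, Ec. fold (Wr t d). fold w.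
    replace (d - k * (K * h * u / k) / (K * u)) with (d - h) by (field; repeat split; lra).
    change (Rpower t (d^2-1)) with w. replace ((d-h)*(1-w)) with (d*(1-w) - h*(1-w)) by ring. rewrite <- Eh. ring.
Qed.


Definition us k s := 1 + k * sin s.
Definition hs k K s := k * cos s / (K * us k s).
Definition wf k K d s := 1 - (d^2 - 1) / (d - hs k K s).
Definition Lf k K d s := ln (wf k K d s) / (d^2 - 1).
Definition tf k K d s := exp (Lf k K d s).
Definition gf k K d s := (exp (pd d * Lf k K d s) - exp (d * Lf k K d s)) / us k s.

Lemma pd_pos d : 1 < d < Phi -> 0 < pd d.
Proof.
  intros [H1 H2]. unfold Phi in H2. unfold pd.
  assert (Hs : sqrt 5 * sqrt 5 = 5) by (apply sqrt_sqrt; lra).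
  assert (Hs0 : 0 <= sqrt 5) by apply sqrt_pos.
  assert (2 * d - 1 < sqrt 5) by lra. nra.
Qed.

Lemma fam_facts k K d s : 0 < k -> 0 < K -> 1 < d -> 0 < pd d -> 0 < us k s -> 0 < cos s ->
  hs k K s < pd d ->
  let t := tf k K d s in let g := gf k K d s in let w := wf k K d s in
  0 < t < 1 /\ 0 < g /\ Fr t d = g * us k s /\ Wr t d = w /\ 0 < w < 1 /\
  (d - hs k K s) * (1 - w) = d^2 - 1 /\ 0 < hs k K s.
Proof.
  intros Hk HK Hd Hp Hu Hc Hh t g w.
  assert (Hd2 : 0 < d^2 - 1) by nra.
  assert (Hh0 : 0 < hs k K s) by (unfold hs; apply Rdiv_lt_0_compat; [nra|apply Rmult_lt_0_compat; lra]).
  assert (Hdh : d^2 - 1 < d - hs k K s) by (unfold pd in Hh; lra).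
  assert (Hw : 0 < w < 1).
  { unfold w, wf. split.
    - assert ((d^2-1)/(d - hs k K s) < 1). { apply (Rmult_lt_reg_r (d - hs k K s)); [lra|]. field_simplify; lra. }
      lra.
    - assert (0 < (d^2-1)/(d - hs k K s)) by (apply Rdiv_lt_0_compat; lra). lra. }
  assert (HL : Lf k K d s < 0).
  { unfold Lf. fold w. apply Rdiv_neg_pos; [|lra]. rewrite <- ln_1. apply ln_increasing; lra. }
  assert (Ht : 0 < t < 1).
  { unfold t, tf. split; [apply exp_pos|]. rewrite <- exp_0. apply exp_increasing; lra. }
  assert (EF : Fr t d = exp (pd d * Lf k K d s) - exp (d * Lf k K d s)).
  { unfold Fr, t, tf. rewrite ln_exp. reflexivity. }
  assert (HF : 0 < Fr t d).
  { rewrite EF. assert (exp (d * Lf k K d s) < exp (pd d * Lf k K d s)).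
    { apply exp_increasing. unfold pd. nra. } lra. }
  repeat split; try lra.
  - unfold g, gf. apply Rdiv_lt_0_compat; [rewrite <- EF|]; lra.
  - rewrite EF. unfold g, gf. field. lra.
  - unfold Wr, t, tf. rewrite ln_exp. unfold Lf. fold w.
    replace ((d^2-1) * (ln w / (d^2-1))) with (ln w) by (field; lra). apply exp_ln; lra.
  - unfold w, wf. field. lra.
Qed.

Lemma fam_H k K d s : 0 < k -> 0 < K -> 1 < d -> 0 < pd d -> 0 < us k s -> 0 < cos s ->
  hs k K s < pd d -> Hset k K (tf k K d s, d, gf k K d s, s).
Proof.
  intros Hk HK Hd Hp Hu Hc Hh.
  destruct (fam_facts k K d s Hk HK Hd Hp Hu Hc Hh) as (Ht & Hg & EF & EW & Hw & Eh & Hh0).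
  apply core; auto.
  change (d - k * cos s / (K * (1 + k * sin s))) with (d - hs k K s).
  - change (Rpower (tf k K d s) (d^2-1)) with (Wr (tf k K d s) d). rewrite EW. exact Eh.
Qed.

Lemma fam_S k K d s : 0 < k -> 0 < K -> 1 < d -> 0 < pd d -> 0 < us k s -> 0 < cos s ->
  hs k K s < pd d -> us k s - 1 + k^2 <> 0 -> Sset k K (tf k K d s, d, gf k K d s).
Proof.
  intros Hk HK Hd Hp Hu Hc Hh Hnz.
  destruct (fam_facts k K d s Hk HK Hd Hp Hu Hc Hh) as (Ht & Hg & EF & EW & Hw & Eh & Hh0).
  set (t := tf k K d s) in *. set (g := gf k K d s) in *. set (w := wf k K d s) in *.
  set (h := hs k K s) in *. set (u := us k s) in *.
  split.
  - apply Rt_spec. rewrite EF, EW. repeat split; try lra.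
    + nra.
    + assert (d * (1 - w) - (d^2 - 1) = h * (1 - w)) by (rewrite <- Eh; ring). nra.
    + replace (g * u - g + k^2 * g) with (g * (u - 1 + k^2)) by ring.
      apply Rmult_integral_contrapositive_currified; lra.
  - rewrite ev_Gt, EF, EW.
    assert (d * (1 - w) - (d^2 - 1) = h * (1 - w)) by (rewrite <- Eh; ring). rewrite H.
    assert (E1 : u - 1 = k * sin s) by (unfold u, us; ring).
    assert (E2 : K * h * u = k * cos s) by (unfold h, hs; fold u; field; lra).
    assert (Hsc := sin2_cos2 s). unfold Rsqr in Hsc.
    replace ((1 - w) ^ 2 * ((g * u - g) ^ 2 - k ^ 2 * g ^ 2) + K ^ 2 * ((h * (1 - w)) ^ 2 * (g * u) ^ 2))
      with ((1-w)^2 * g^2 * ((u - 1)^2 + (K * h * u)^2 - k^2)) by ring.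
    rewrite E1, E2. replace ((k * sin s) ^ 2 + (k * cos s) ^ 2 - k ^ 2) with (k^2 * (sin s * sin s + cos s * cos s - 1)) by ring.
    rewrite Hsc. ring.
Qed.


Lemma cont_tf k K d s0 : 0 < k -> 0 < K -> 1 < d -> 0 < pd d -> cos s0 = 0 -> 0 < us k s0 ->
  continuous (tf k K d) s0 /\ continuous (gf k K d) s0 /\ continuous (hs k K) s0 /\ continuous (us k) s0.
Proof.
  intros Hk HK Hd Hp Hc Hu.
  assert (Hh : hs k K s0 = 0). { unfold hs; rewrite Hc, Rmult_0_r. unfold Rdiv. apply Rmult_0_l. }
  assert (Hw : wf k K d s0 = pd d / d). { unfold wf; rewrite Hh; unfold pd. field. lra. }
  unfold us in Hu.
  repeat split; apply (ex_derive_continuous (K:=R_AbsRing) (V:=R_NormedModule)); unfold tf, gf, Lf, wf, hs, us; auto_derive.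
  all: assert (Hq : 0 < 1 + - ((d * (d * 1) - 1) * / d)) by
    (replace (1 + - ((d * (d * 1) - 1) * / d)) with (pd d / d) by (unfold pd; field; lra);
     apply Rdiv_lt_0_compat; lra).
  all: assert (HKu : K * (1 + k * sin s0) <> 0) by (apply Rmult_integral_contrapositive_currified; lra).
  all: rewrite ?Hc, ?Rmult_0_r, ?Rmult_0_l, ?Ropp_0, ?Rplus_0_r; repeat split; auto; lra.
Qed.

Lemma locR_close (f : R -> R) x : continuous f x -> forall e : posreal,
  locally x (fun y => Rabs (f y - f x) < e).
Proof. intros Hc e. apply (Hc (fun z => Rabs (z - f x) < e)). exists e. intros y Hy. exact Hy. Qed.

Lemma locR_close' (f : R -> R) x e : continuous f x -> 0 < e ->
  locally x (fun y => Rabs (f y - f x) < e).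
Proof. intros Hc He. exact (locR_close f x Hc (mkposreal e He)). Qed.

Lemma val_tf k K d s0 : 0 < k -> 0 < K -> 1 < d -> 0 < pd d -> cos s0 = 0 -> 0 < us k s0 ->
  tf k K d s0 = tau_m d.
Proof.
  intros Hk HK Hd Hp Hc Hu.
  assert (Hh : hs k K s0 = 0). { unfold hs; rewrite Hc, Rmult_0_r. unfold Rdiv. apply Rmult_0_l. }
  assert (Hw : wf k K d s0 = pd d / d). { unfold wf; rewrite Hh; unfold pd. field. lra. }
  unfold tf, Lf, tau_m, Rpower. rewrite Hw. f_equal. field. nra.
Qed.

Lemma val_gf k K d s0 : 0 < k -> 0 < K -> 1 < d -> 0 < pd d -> cos s0 = 0 -> 0 < us k s0 ->
  gf k K d s0 = MF d / us k s0.
Proof.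
  intros. unfold MF, FF. rewrite <- (val_tf k K d s0) by auto.
  unfold gf, tf, Rpower. rewrite ln_exp. reflexivity.
Qed.

Lemma approach k K d s0 sg : 0 < k -> 0 < K -> 1 < d -> 0 < pd d -> cos s0 = 0 -> 0 < us k s0 ->
  us k s0 - 1 + k^2 <> 0 -> (sg = 1 \/ sg = -1) ->
  (forall e, 0 < e < PI/2 -> 0 < cos (s0 + sg * e)) ->
  forall eps, 0 < eps -> exists s, s <> s0 /\ Rabs (s - s0) < eps /\
    Hset k K (tf k K d s, d, gf k K d s, s) /\ Sset k K (tf k K d s, d, gf k K d s) /\
    Rabs (tf k K d s - tau_m d) < eps /\ Rabs (gf k K d s - MF d / us k s0) < eps.
Proof.
  intros Hk HK Hd Hp Hc Hu Hnz Hsg Hdir eps Heps.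
  destruct (cont_tf k K d s0 Hk HK Hd Hp Hc Hu) as (Ct & Cg & Ch & Cu).
  assert (Hh : hs k K s0 = 0). { unfold hs; rewrite Hc, Rmult_0_r. unfold Rdiv. apply Rmult_0_l. }
  assert (L1 := locR_close' _ _ _ Cu Hu).
  assert (L2 := locR_close' _ _ _ Ch Hp).
  assert (Ha : 0 < Rabs (us k s0 - 1 + k^2)) by (apply Rabs_pos_lt; auto).
  assert (L3 := locR_close' _ _ _ Cu Ha).
  assert (L4 := locR_close' _ _ _ Ct Heps).
  assert (L5 := locR_close' _ _ _ Cg Heps).
  rewrite (val_tf k K d s0) in L4 by auto. rewrite (val_gf k K d s0) in L5 by auto.
  destruct (filter_and _ _ L1 (filter_and _ _ L2 (filter_and _ _ L3 (filter_and _ _ L4 L5))))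
    as [rho Hrho].
  set (e := Rmin (rho / 2) (Rmin (eps / 2) (PI / 4))).
  assert (Hr := cond_pos rho). assert (HPI := PI_RGT_0).
  assert (He : 0 < e) by (unfold e; repeat apply Rmin_pos; lra).
  assert (He1 : e <= rho / 2) by apply Rmin_l.
  assert (He2 : e <= eps / 2) by (eapply Rle_trans; [apply Rmin_r|apply Rmin_l]).
  assert (He3 : e <= PI / 4) by (eapply Rle_trans; [apply Rmin_r|apply Rmin_r]).
  assert (Hds : Rabs (s0 + sg * e - s0) = e).
  { replace (s0 + sg * e - s0) with (sg * e) by ring.
    destruct Hsg as [-> | ->]; [replace (1*e) with e by ring | replace (-1*e) with (-e) by ring; rewrite Rabs_Ropp];
    apply Rabs_pos_eq; lra. }
  exists (s0 + sg * e).
  destruct (Hrho (s0 + sg * e)) as (P1 & P2 & P3 & P4 & P5).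
  { apply ballR. rewrite Hds. lra. }
  rewrite Hh in P2.
  assert (Hc' : 0 < cos (s0 + sg * e)) by (apply Hdir; lra).
  assert (Hu' : 0 < us k (s0 + sg * e)) by (apply Rabs_def2 in P1; lra).
  assert (Hh' : hs k K (s0 + sg * e) < pd d) by (apply Rabs_def2 in P2; lra).
  assert (Hn' : us k (s0 + sg * e) - 1 + k ^ 2 <> 0).
  { intros Hz. replace (us k (s0 + sg * e) - us k s0) with (- (us k s0 - 1 + k^2)) in P3
      by lra. rewrite Rabs_Ropp in P3. lra. }
  refine (conj _ (conj _ (conj _ (conj _ (conj _ _))))); auto.
  - intros Hz. rewrite Hz in Hds. replace (s0 - s0) with 0 in Hds by ring. rewrite Rabs_R0 in Hds. lra.
  - rewrite Hds. lra.
  - apply fam_H; auto.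
  - apply fam_S; auto.
Qed.


Lemma main_aux k K d s0 sg : 0 < k -> 0 < K -> 1 < d -> 0 < pd d -> cos s0 = 0 -> 0 < us k s0 ->
  us k s0 - 1 + k^2 <> 0 -> (sg = 1 \/ sg = -1) ->
  (forall e, 0 < e < PI/2 -> 0 < cos (s0 + sg * e)) ->
  accumulation_point4 (Hset k K) (tau_m d, d, MF d / us k s0, s0) /\
    exists S : R * R * R -> Prop,
      smooth_surface3 S /\
      (forall t d g, S (t, d, g) -> exists s, Hset k K (t, d, g, s)) /\
      in_closure3 S (tau_m d, d, MF d / us k s0).
Proof.
  intros Hk HK Hd Hp Hc Hu Hnz Hsg Hdir.
  pose proof (approach k K d s0 sg Hk HK Hd Hp Hc Hu Hnz Hsg Hdir) as A.
  split.
  - intros eps Heps. destruct (A eps Heps) as (s & Hne & Hs & HH & HS & Ht & Hg).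
    exists (tf k K d s), d, (gf k K d s), s. split; [exact HH|]. split.
    + intros E. injection E. intros; auto.
    + replace (d - d) with 0 by ring. rewrite Rabs_R0. repeat split; auto.
  - exists (Sset k K). split; [|split].
    + apply surf. destruct (A 1 Rlt_0_1) as (s & _ & _ & _ & HS & _). eexists; exact HS.
    + intros t d' g HS. apply S_H; auto.
    + intros eps Heps. destruct (A eps Heps) as (s & Hne & Hs & HH & HS & Ht & Hg).
      exists (tf k K d s), d, (gf k K d s). split; [exact HS|].
      replace (d - d) with 0 by ring. rewrite Rabs_R0. repeat split; auto.
Qed.

Theorem mainTheorem9 :
  forall k K : R, 0 < k -> 0 < K ->
  forall taus ds gs ss : R,
    1 < ds < Phi ->
    taus = tau_m ds ->
    ((gs = MF ds / (1 + k) /\ ss = PI / 2) \/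
     (0 < k < 1 /\ gs = MF ds / (1 - k) /\ ss = 3 * PI / 2)) ->
    accumulation_point4 (Hset k K) (taus, ds, gs, ss) /\
    exists S : R * R * R -> Prop,
      smooth_surface3 S /\
      (forall t d g, S (t, d, g) -> exists s, Hset k K (t, d, g, s)) /\
      in_closure3 S (taus, ds, gs).
Proof.
  intros k K Hk HK taus ds gs ss Hd Htau Hcase.
  assert (Hp := pd_pos ds Hd). subst taus.
  destruct Hcase as [[Hg Hs] | [Hk1 [Hg Hs]]].
  - assert (Eu : us k (PI/2) = 1 + k) by (unfold us; rewrite sin_PI2; ring).
    subst gs ss. rewrite <- Eu.
    apply (main_aux k K ds (PI/2) (-1)); auto; try lra; try apply cos_PI2;
      try (rewrite Eu; intros Hz; nra); try (rewrite Eu; lra).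
    intros e He. replace (PI/2 + -1 * e) with (PI/2 - e) by ring. rewrite cos_shift.
      apply sin_gt_0; lra.
  - assert (E3 : 3 * PI / 2 = 3 * (PI / 2)) by field.
    assert (Hc3 : cos (3 * (PI / 2)) = 0).
    { replace (3 * (PI / 2)) with (PI / 2 + PI) by field. rewrite neg_cos, cos_PI2. ring. }
    assert (Eu : us k (3 * (PI/2)) = 1 - k) by (unfold us; rewrite sin_3PI2; ring).
    subst gs ss. rewrite E3, <- Eu.
    apply (main_aux k K ds (3 * (PI/2)) 1); auto; try lra;
      try (rewrite Eu; intros Hz; nra); try (rewrite Eu; lra).
    intros e He. rewrite cos_plus, Hc3, sin_3PI2. rewrite Rmult_1_l.
      assert (0 < sin e) by (apply sin_gt_0; lra). lra.
Qed.
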